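(* Let $X$ be a nominal set and $g:\mathcal V\to X$ any function. Then $g\in RX$ if and only if (1) $x\# g(x)$ for all $x\in\mathcal V$, and (2) there is a finite set $S\subseteq\mathcal V$ such that $\mathsf{supp}(g(x))\subseteq S$ for all $x\in\mathcal V$ and $g$ is constant on $\mathcal V\setminus S$.
   Context: Nominal sets over a countably infinite set $\mathcal V$ of names (sets with an action of finite permutations of $\mathcal V$, every element having a finite support; $\mathsf{supp}(u)$ the least support, $x\#u$ iff $x\notin\mathsf{supp}(u)$). $[\mathcal V,X]$ denotes the nominal set of functions $\mathcal V\to X$ that are finitely supported under $(\pi\cdot f)(x)=\pi\cdot f(\pi^{-1}(x))$. $RX=\{g\in[\mathcal V,X]\mid \forall x\in\mathcal V,\ x\#g(x)\}$. *)

(* Defs.v *)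
(* Nominal sets over the countably infinite set of names V := nat. *)
From Stdlib Require Import List.
Import ListNotations.

Record fperm := FPerm {
  pf : nat -> nat;
  pinv : nat -> nat;
  pfK : forall x, pinv (pf x) = x;
  pinvK : forall x, pf (pinv x) = x;
  pfin : exists l : list nat, forall x, ~ In x l -> pf x = x
}.

Definition pid : fperm.
Proof.
  refine (FPerm (fun x => x) (fun x => x) _ _ _); try reflexivity.
  exists nil; intros x _; reflexivity.
Defined.

Definition pcomp (p q : fperm) : fperm.
Proof.
  refine (FPerm (fun x => pf p (pf q x)) (fun x => pinv q (pinv p x)) _ _ _).
  - intro x; rewrite pfK, pfK; reflexivity.
  - intro x; rewrite pinvK, pinvK; reflexivity.
  - destruct (pfin p) as [lp Hp]; destruct (pfin q) as [lq Hq].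
    exists (lp ++ lq); intros x Hx.
    rewrite Hq by (intro H; apply Hx, in_or_app; right; exact H).
    apply Hp; intro H; apply Hx, in_or_app; left; exact H.
Defined.

Definition fixes (S : list nat) (p : fperm) : Prop :=
  forall x, In x S -> pf p x = x.

Definition supports {A : Type} (act : fperm -> A -> A) (S : list nat) (u : A) : Prop :=
  forall p, fixes S p -> act p u = u.

(* Nominal sets: a set with an action of finite permutations (well defined on
   permutations, i.e. depending only on the underlying bijection), every
   element having a finite support. *)
Record nominal := Nominal {
  nom :> Type;
  act : fperm -> nom -> nom;
  act_id : forall u, act pid u = u;
  act_comp : forall p q u, act p (act q u) = act (pcomp p q) u;
  act_ext : forall p q u, (forall x, pf p x = pf q x) -> act p u = act q u;
  nom_fin : forall u, exists S : list nat, supports act S u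
}.

(* x ∈ supp(u): x lies in every finite support of u (supp(u) = least finite support) *)
Definition in_supp (X : nominal) (x : nat) (u : X) : Prop :=
  forall S : list nat, supports (act X) S u -> In x S.

Definition fresh (X : nominal) (x : nat) (u : X) : Prop := ~ in_supp X x u.

Definition fun_act (X : nominal) (p : fperm) (f : nat -> X) : nat -> X :=
  fun x => act X p (f (pinv p x)).

Definition fun_finsupp (X : nominal) (f : nat -> X) : Prop :=
  exists S : list nat, forall p, fixes S p -> forall x, fun_act X p f x = f x.

Definition inR (X : nominal) (g : nat -> X) : Prop :=
  fun_finsupp X g /\ forall x, fresh X x (g x).

(* Main.v *)
Require Import Defs.
From Stdlib Require Import List Classical Lia Arith.
Import ListNotations.

Definition swf (a b x : nat) : nat :=
  if Nat.eq_dec x a then b else if Nat.eq_dec x b then a else x.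

Lemma swf_inv a b x : swf a b (swf a b x) = x.
Proof.
  unfold swf; repeat (destruct Nat.eq_dec; subst; try congruence).
Qed.

Definition swp (a b : nat) : fperm.
Proof.
  refine (FPerm (swf a b) (swf a b) (swf_inv a b) (swf_inv a b) _).
  exists [a; b]; intros x Hx; unfold swf.
  destruct Nat.eq_dec; [subst; simpl in Hx; tauto|].
  destruct Nat.eq_dec; [subst; simpl in Hx; tauto|]. reflexivity.
Defined.

Lemma swf_other a b x : x <> a -> x <> b -> swf a b x = x.
Proof. intros; unfold swf; repeat destruct Nat.eq_dec; congruence. Qed.

Lemma swp_twice (X : nominal) a b (w : X) : act X (swp a b) (act X (swp a b) w) = w.
Proof.
  rewrite act_comp. rewrite <- (act_id X w) at 2. apply act_ext.
  intro x; simpl; apply swf_inv.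
Qed.

Fixpoint lsum (l : list nat) : nat := match l with [] => 0 | x :: l => x + lsum l end.
Lemma lsum_ge l x : In x l -> x <= lsum l.
Proof. induction l; simpl; intuition; subst; lia. Qed.
Lemma fresh_name (l : list nat) : exists n, ~ In n l.
Proof. exists (S (lsum l)); intro H; apply lsum_ge in H; lia. Qed.

Lemma supports_mono (X : nominal) (A C : list nat) (u : X) :
  supports (act X) A u -> (forall x, In x A -> In x C) -> supports (act X) C u.
Proof. intros H HC p Hp; apply H; intros x Hx; apply Hp, HC, Hx. Qed.

Lemma removal (X : nominal) (A B C : list nat) (a : nat) (u : X) :
  supports (act X) A u -> supports (act X) B u -> ~ In a B ->
  (forall x, In x A -> x <> a -> In x C) -> supports (act X) C u.
Proof.
  intros HA HB HaB HC p Hp.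
  assert (Hpa' : pf p (pinv p a) = a) by apply pinvK.
  remember (pinv p a) as a' eqn:Ea'. clear Ea'.
  destruct (Nat.eq_dec a' a) as [E|E].
  - apply HA; intros x Hx. destruct (Nat.eq_dec x a).
    + subst x. rewrite E in Hpa'. exact Hpa'.
    + apply Hp, HC; auto.
  -     assert (Ha'A : ~ In a' A).
    { intro H. assert (pf p a' = a') by (apply Hp, HC; auto). congruence. }
    destruct (fresh_name (A ++ B ++ [a; a'])) as [b Hb].
    assert (Hb1 : ~ In b A) by (intro; apply Hb; apply in_or_app; auto).
    assert (Hb2 : ~ In b B) by (intro; apply Hb; apply in_or_app; right; apply in_or_app; auto).
    assert (Hb3 : b <> a) by (intro; apply Hb; apply in_or_app; right; apply in_or_app; right; simpl; auto).
    assert (Hb4 : b <> a') by (intro; apply Hb; apply in_or_app; right; apply in_or_app; right; simpl; auto).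
    assert (HsB : act X (swp a b) u = u).
    { apply HB; intros x Hx; simpl; apply swf_other; intro; subst; auto. }
    assert (HD : forall q, (forall x, (In x A /\ x <> a) \/ x = b -> pf q x = x) ->
                  act X q u = u).
    { intros q Hq.
      assert (act X (pcomp (swp a b) (pcomp q (swp a b))) u = u).
      { apply HA; intros x Hx; simpl.
        destruct (Nat.eq_dec x a).
        - subst x. unfold swf at 2. destruct Nat.eq_dec; [|congruence].
          rewrite Hq by auto. unfold swf. destruct Nat.eq_dec; [congruence|].
          destruct Nat.eq_dec; congruence.
        - assert (x <> b) by (intro; subst; auto).
          rewrite (swf_other a b x) by auto. rewrite Hq by auto.
          apply swf_other; auto. }
      rewrite <- act_comp, <- act_comp, HsB in H.
      rewrite <- (swp_twice X a b (act X q u)), H. exact HsB. }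
    assert (Ht : act X (swp a a') u = u).
    { apply HD; intros x [[Hx Hxa] | ->]; simpl.
      - apply swf_other; auto; intro; subst; auto.
      - apply swf_other; auto. }
    assert (Hpt : act X (pcomp p (swp a a')) u = u).
    { apply HA; intros x Hx; simpl. destruct (Nat.eq_dec x a).
      - subst x. unfold swf. destruct Nat.eq_dec; [|congruence]. exact Hpa'.
      - rewrite swf_other by (auto; intro; subst; auto). apply Hp, HC; auto. }
    rewrite <- Ht at 1. rewrite act_comp.
    rewrite <- Hpt at 2. rewrite <- act_comp, Ht. reflexivity.
Qed.

Lemma fresh_support (X : nominal) a (u : X) :
  ~ in_supp X a u -> exists B, supports (act X) B u /\ ~ In a B.
Proof.
  intro H. unfold in_supp in H. apply not_all_ex_not in H. destruct H as [B HB].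
  exists B. apply imply_to_and in HB. exact HB.
Qed.

Lemma supp_supports (X : nominal) (S : list nat) (u : X) :
  (forall y, in_supp X y u -> In y S) -> supports (act X) S u.
Proof.
  intro HS. destruct (nom_fin X u) as [T HT].
  assert (H : supports (act X) (S ++ T) u).
  { apply (supports_mono X T); auto. intros; apply in_or_app; auto. }
  clear HT. induction T as [|a T IH].
  - rewrite app_nil_r in H; exact H.
  - apply IH. destruct (in_dec Nat.eq_dec a S) as [Ha|Ha].
    + apply (supports_mono X _ _ _ H). intros x Hx. apply in_app_or in Hx.
      apply in_or_app. destruct Hx as [Hx|[<-|Hx]]; auto.
    + assert (Hn : ~ in_supp X a u) by (intro Hi; apply Ha, HS, Hi).
      destruct (fresh_support X a u Hn) as [B [HB HaB]].
      apply (removal X _ B _ a u H HB HaB).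
      intros x Hx Hxa. apply in_app_or in Hx. apply in_or_app.
      destruct Hx as [Hx|[Hx|Hx]]; auto; congruence.
Qed.

Theorem lemma4p12 (X : nominal) (g : nat -> X) :
  inR X g <->
  ((forall x, fresh X x (g x)) /\
   exists S : list nat,
     (forall x y, in_supp X y (g x) -> In y S) /\
     (forall x y, ~ In x S -> ~ In y S -> g x = g y)).
Proof.
  split.
  - intros [[S0 HS0] Hfr]. split; [exact Hfr|]. exists S0. split.
    + intros x y Hy.
      assert (Hsup : supports (act X) (S0 ++ [x]) (g x)).
      { intros p Hp. pose proof (HS0 p (fun z Hz => Hp z (in_or_app _ _ _ (or_introl Hz))) x) as E.
        unfold fun_act in E.
        assert (pinv p x = x).
        { rewrite <- (Hp x) at 1 by (apply in_or_app; simpl; auto). apply pfK. }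
        rewrite H in E; exact E. }
      apply Hy in Hsup. apply in_app_or in Hsup. destruct Hsup as [H|[H|[]]]; auto.
      subst y. exfalso; exact (Hfr x Hy).
    + assert (Key : forall x z T, ~ In x S0 -> ~ In z S0 -> supports (act X) T (g x) ->
                ~ In x T -> ~ In z T -> g z = g x).
      { intros x z T Hx Hz HT HxT HzT.
        assert (Hfix : fixes S0 (swp x z)).
        { intros w Hw; simpl; apply swf_other; intro; subst; auto. }
        pose proof (HS0 _ Hfix z) as E. unfold fun_act in E. simpl in E.
        assert (swf x z z = x).
        { unfold swf. repeat destruct Nat.eq_dec; congruence. }
        rewrite H in E. rewrite <- E. apply HT.
        intros w Hw; simpl; apply swf_other; intro; subst; auto. }
      intros x y Hx Hy.
      destruct (fresh_support X x (g x) (Hfr x)) as [Tx [HTx HxT]].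
      destruct (fresh_support X y (g y) (Hfr y)) as [Ty [HTy HyT]].
      destruct (fresh_name (S0 ++ Tx ++ Ty)) as [z Hz].
      assert (~ In z S0) by (intro; apply Hz; apply in_or_app; auto).
      assert (~ In z Tx) by (intro; apply Hz; apply in_or_app; right; apply in_or_app; auto).
      assert (~ In z Ty) by (intro; apply Hz; apply in_or_app; right; apply in_or_app; auto).
      rewrite <- (Key x z Tx), <- (Key y z Ty); auto.
  - intros [Hfr [S [HS Hc]]]. split; [|exact Hfr].
    exists S. intros p Hp x. unfold fun_act.
    assert (Hsup : forall w, supports (act X) S (g w)) by (intro w; apply supp_supports, HS).
    destruct (in_dec Nat.eq_dec x S) as [Hx|Hx].
    + assert (pinv p x = x) by (rewrite <- (Hp x Hx) at 1; apply pfK).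
      rewrite H. apply Hsup, Hp.
    + assert (Hx' : ~ In (pinv p x) S).
      { intro H. pose proof (Hp _ H) as E. rewrite pinvK in E. rewrite <- E in H. auto. }
      rewrite (Hc (pinv p x) x Hx' Hx). apply Hsup, Hp.
Qed.
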